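(* Let $q=3$. Under $G_3$ there are exactly $4$ plane orbits and $4$ point orbits, namely: planes: $\mathcal N_1=\{\Gamma\text{-planes}\}\cup\{\overline{1_{\mathscr C}}\text{-planes}\}$ of size $4+12=16$; $\mathcal N_2=\{2_{\mathscr C}\text{-planes}\}$ of size $12$; $\mathcal N_3=\{3_{\mathscr C}\text{-planes}\}$ of size $4$; $\mathcal N_4=\{0_{\mathscr C}\text{-planes}\}$ of size $8$; points: $\mathcal M_1=\{\mathscr C\text{-points}\}$ of size $4$; $\mathcal M_2=\{4_\Gamma\text{-points}\}\cup\{\text{IC-points}\}$ of size $4+12=16$; $\mathcal M_3=\{\text{TO-points}\}$ of size $8$; $\mathcal M_4=\{\text{RC-points}\}$ of size $12$.
   Context: Notation. $\mathbb F_q$ is the field with $q$ elements, $\mathbb F_q^+=\mathbb F_q\cup\{\infty\}$. Points of $\mathrm{PG}(3,q)$ are written $\mathbf P(x_0,x_1,x_2,x_3)$ with $x$ a nonzero row vector up to scalars; $\boldsymbol\pi(c_0,c_1,c_2,c_3)$ is the plane $c_0x_0+c_1x_1+c_2x_2+c_3x_3=0$. Put $P(t)=\mathbf P(t^3,t^2,t,1)$ for $t\in\mathbb F_q$, $P(\infty)=\mathbf P(1,0,0,0)$, and $\mathscr C=\{P(t):t\in\mathbb F_q^+\}$ (the twisted cubic). The osculating planes are $\pi_{\rm osc}(t)=\boldsymbol\pi(1,-3t,3t^2,-t^3)$ ($t\in\mathbb F_q$) and $\pi_{\rm osc}(\infty)=\boldsymbol\pi(0,0,0,1)$; these $q+1$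 planes are called $\Gamma$-planes. The tangent at $P(t)$, $t\in\mathbb F_q$, is the line through $P(t)$ and $\mathbf P(3t^2,2t,1,0)$; the tangent at $P(\infty)$ is the line through $\mathbf P(1,0,0,0)$ and $\mathbf P(0,1,0,0)$. A real chord is a line through two distinct points of $\mathscr C$. For $\alpha\in\mathbb F_{q^2}\setminus\mathbb F_q$, the line of $\mathrm{PG}(3,q^2)$ through $P(\alpha),P(\alpha^q)$ is defined over $\mathbb F_q$, and the corresponding line of $\mathrm{PG}(3,q)$ is an imaginary chord. $G_q$ is the group of all projectivities of $\mathrm{PG}(3,q)$ mapping $\mathscr C$ onto itself. Plane types: $\Gamma$-plane = osculating plane; $\overline{1_{\mathscr C}}$-plane = non-osculating plane meeting $\mathscr C$ in exactly one point; $d_{\mathscr C}$-plane ($d\in\{0,2,3\}$) = plane meeting $\mathscr C$ in exactly $d$ points. For $q=3$ all four $\Gamma$-planes contain the line $\mathcal A:\ x_0=x_3=0$. Point types for $q=3$: $\mathscr C$-point = point of $\mathscr C$; $4_\Gamma$-point = point of $\mathcal A$; TO-point = point not in $\mathscr C\cup\mathcal A$ lying on a tangent; RC-point = point not in $\mathscr C\cup\mathcal A$, on no tangent, lying on a real chord; IC-point = any point of none of the previous types (such points lie on imaginary chords). *)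

(* Defs.v *)
(* PG(3,3) modelled via F_3^4: points = 1-dim subspaces,
   planes = 3-dim subspaces, both as sets of row vectors. *)
From mathcomp Require Import all_boot all_order all_algebra.
Set Implicit Arguments. Unset Strict Implicit. Unset Printing Implicit Defensive.
Import GRing.Theory.
Local Open Scope ring_scope.

Notation F := 'F_3.
Notation vec := 'rV[F]_4.

Definition coord (x : vec) (i : nat) : F := x ord0 (inord i).

Definition mkv (a b c d : F) : vec := \row_(i < 4) nth 0 [:: a; b; c; d] i.

Definition span1 (v : vec) : {set vec} := [set k *: v | k : F].
Definition span2 (u w : vec) : {set vec} := [set a *: u + b *: w | a : F, b : F].
Definition hyp (c : vec) : {set vec} :=
  [set x : vec | \sum_(i < 4) c ord0 i * x ord0 i == 0].

Definition points : {set {set vec}} := [set span1 v | v in [set v : vec | v != 0]].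
Definition planes : {set {set vec}} := [set hyp c | c in [set c : vec | c != 0]].

(* t in F_q^+ is modelled as option F, None = infinity *)
Definition cvec (t : option F) : vec :=
  if t is Some s then mkv (s ^+ 3) (s ^+ 2) s 1 else mkv 1 0 0 0.
Definition cpt (t : option F) : {set vec} := span1 (cvec t).
Definition Ccurve : {set {set vec}} := [set cpt t | t : option F].

Definition osc (t : option F) : {set vec} :=
  if t is Some s then hyp (mkv 1 (- 3%:R * s) (3%:R * s ^+ 2) (- s ^+ 3))
  else hyp (mkv 0 0 0 1).
Definition GammaPlanes : {set {set vec}} := [set osc t | t : option F].

Definition tangent (t : option F) : {set vec} :=
  if t is Some s then span2 (cvec t) (mkv (3%:R * s ^+ 2) (2%:R * s) 1 0)
  else span2 (mkv 1 0 0 0) (mkv 0 1 0 0).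

Definition act (A : 'M[F]_4) (S : {set vec}) : {set vec} := (fun u => u *m A) @: S.

Definition G3 : {set 'M[F]_4} :=
  [set A : 'M[F]_4 | (A \in unitmx) && ([set act A P | P in Ccurve] == Ccurve)].

Definition Gorbit (S : {set vec}) : {set {set vec}} := [set act A S | A in G3].

Definition meetC (pi : {set vec}) : nat := #|[set P in Ccurve | P \subset pi]|.
Definition oneBarPlanes : {set {set vec}} :=
  [set pi in planes | (meetC pi == 1%N) && (pi \notin GammaPlanes)].
Definition dPlanes (d : nat) : {set {set vec}} := [set pi in planes | meetC pi == d].

Definition axisA : {set vec} := [set x : vec | (coord x 0 == 0) && (coord x 3 == 0)].
Definition on_tangent (P : {set vec}) : bool := [exists t : option F, P \subset tangent t].
Definition on_real_chord (P : {set vec}) : bool :=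
  [exists s : option F, exists t : option F,
     (s != t) && (P \subset span2 (cvec s) (cvec t))].

Definition CPoints : {set {set vec}} := [set P in points | P \in Ccurve].
Definition FourGammaPoints : {set {set vec}} := [set P in points | P \subset axisA].
Definition TOPoints : {set {set vec}} :=
  [set P in points | [&& P \notin Ccurve, ~~ (P \subset axisA) & on_tangent P]].
Definition RCPoints : {set {set vec}} :=
  [set P in points | [&& P \notin Ccurve, ~~ (P \subset axisA), ~~ on_tangent P
                       & on_real_chord P]].
Definition ICPoints : {set {set vec}} :=
  [set P in points | [&& P \notin Ccurve, ~~ (P \subset axisA), ~~ on_tangent P
                       & ~~ on_real_chord P]].

Definition N1 := GammaPlanes :|: oneBarPlanes.
Definition N2 := dPlanes 2.
Definition N3 := dPlanes 3.
Definition N4 := dPlanes 0.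
Definition M1 := CPoints.
Definition M2 := FourGammaPoints :|: ICPoints.
Definition M3 := TOPoints.
Definition M4 := RCPoints.

(* Main.v *)
Require Import Defs.
From mathcomp Require Import all_boot all_order all_algebra.
Set Implicit Arguments. Unset Strict Implicit. Unset Printing Implicit Defensive.
Import GRing.Theory.
Local Open Scope ring_scope.


Definition T4 := (F * F * F * F)%type.
Definition tov (p : T4) : vec := let: (a, b, c, d) := p in mkv a b c d.
Definition i0 : 'I_4 := @Ordinal 4 0 isT.
Definition i1 : 'I_4 := @Ordinal 4 1 isT.
Definition i2 : 'I_4 := @Ordinal 4 2 isT.
Definition i3 : 'I_4 := @Ordinal 4 3 isT.
Definition ofv (x : vec) : T4 := (x ord0 i0, x ord0 i1, x ord0 i2, x ord0 i3).

Lemma ofvK x : tov (ofv x) = x.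
Proof.
apply/rowP => i; rewrite mxE.
by case: i => [[|[|[|[|//]]]] Hi] /=; congr (x _ _); apply: val_inj.
Qed.

Lemma tovK p : ofv (tov p) = p.
Proof. by case: p => [[[a b] c] d]; rewrite /ofv /= !mxE. Qed.

Lemma tov_inj : injective tov.
Proof. by move=> p q /(congr1 ofv); rewrite !tovK. Qed.

Definition f0 : F := @Ordinal (Zp_trunc (pdiv 3)).+2 0 isT.
Definition f1 : F := @Ordinal (Zp_trunc (pdiv 3)).+2 1 isT.
Definition f2 : F := @Ordinal (Zp_trunc (pdiv 3)).+2 2 isT.
Definition Fl : seq F := [:: f0; f1; f2].
Definition fadd (a b : F) : F := nth f0 Fl ((val a + val b) %% 3).
Definition fmul (a b : F) : F := nth f0 Fl ((val a * val b) %% 3).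
Lemma memFl (a : F) : a \in Fl.
Proof.
case: a => [[|[|[|n]]] Hn] //.
all: first [ by rewrite (_ : Ordinal Hn = f0) ?inE ?eqxx //; exact: val_inj
           | by rewrite (_ : Ordinal Hn = f1) ?inE ?eqxx ?orbT //; exact: val_inj
           | by rewrite (_ : Ordinal Hn = f2) ?inE ?eqxx ?orbT //; exact: val_inj ].
Qed.
Lemma f0E : f0 = 0. Proof. by apply: val_inj. Qed.
Lemma f1E : f1 = 1. Proof. by apply: val_inj. Qed.
Lemma f2E : f2 = 2%:R. Proof. by apply: val_inj. Qed.
Lemma FlE : Fl = [:: 0; 1; 2%:R]. Proof. by rewrite /Fl f0E f1E f2E. Qed.
Lemma Fcase (P : F -> Prop) : P f0 -> P f1 -> P f2 -> forall a, P a.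
Proof.
move=> H0 H1 H2 a; have := memFl a; rewrite !inE.
by case/orP => [/eqP ->|/orP[/eqP ->|/eqP ->]].
Qed.
Lemma faddE a b : fadd a b = a + b.
Proof. by elim/Fcase: a; elim/Fcase: b; apply: val_inj. Qed.
Lemma fmulE a b : fmul a b = a * b.
Proof. by elim/Fcase: a; elim/Fcase: b; apply: val_inj. Qed.

Definition scaleT (k : F) (p : T4) : T4 :=
  let: (a, b, c, d) := p in (fmul k a, fmul k b, fmul k c, fmul k d).
Definition addT (p q : T4) : T4 :=
  let: (a, b, c, d) := p in let: (a', b', c', d') := q in (fadd a a', fadd b b', fadd c c', fadd d d').
Definition dotT (p q : T4) : F :=
  let: (a, b, c, d) := p in let: (a', b', c', d') := q in
  fadd (fadd (fadd (fmul a a') (fmul b b')) (fmul c c')) (fmul d d').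

Lemma scaleTE k p : k *: tov p = tov (scaleT k p).
Proof.
case: p => [[[a b] c] d]; apply/rowP => i; rewrite !mxE !fmulE.
by case: i => [[|[|[|[|//]]]] Hi].
Qed.

Lemma addTE p q : tov p + tov q = tov (addT p q).
Proof.
case: p => [[[a b] c] d]; case: q => [[[a' b'] c'] d']; apply/rowP => i; rewrite !mxE !faddE.
by case: i => [[|[|[|[|//]]]] Hi].
Qed.

Lemma dotTE c x : \sum_(i < 4) tov c ord0 i * tov x ord0 i = dotT c x.
Proof.
case: c => [[[a b] c] d]; case: x => [[[a' b'] c'] d'].
by rewrite !big_ord_recl big_ord0 !mxE /= addr0 !addrA !faddE !fmulE.
Qed.

Lemma in_hypT c x : (tov x \in hyp (tov c)) = (dotT c x == 0).
Proof. by rewrite inE dotTE. Qed.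


Lemma in_span1T v x : (tov x \in span1 (tov v)) = has (fun k => x == scaleT k v) Fl.
Proof.
apply/imsetP/hasP => [[k _ Hk]|[k _ /eqP ->]].
  by rewrite scaleTE in Hk; exists k; rewrite ?memFl // (tov_inj Hk).
by exists k; rewrite // scaleTE.
Qed.

Definition inspan2 (x u w : T4) :=
  has (fun a => has (fun b => x == addT (scaleT a u) (scaleT b w)) Fl) Fl.

Lemma in_span2T u w x : (tov x \in span2 (tov u) (tov w)) = inspan2 x u w.
Proof.
apply/imset2P/hasP => [[a b _ _ H]|[a _ /hasP[b _ /eqP ->]]].
  rewrite !scaleTE addTE in H; exists a; rewrite ?memFl //.
  by apply/hasP; exists b; rewrite ?memFl // (tov_inj H).
by exists a b => //; rewrite !scaleTE addTE.
Qed.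


Lemma dotM (c x : vec) : \sum_(i < 4) c ord0 i * x ord0 i = (c *m x^T) ord0 ord0.
Proof. by rewrite !mxE; apply: eq_bigr => i _; rewrite !mxE. Qed.

Lemma in_hyp c x : (x \in hyp c) = ((c *m x^T) ord0 ord0 == 0).
Proof. by rewrite inE dotM. Qed.

Lemma act_span1 A v : act A (span1 v) = span1 (v *m A).
Proof.
rewrite /act /span1 -imset_comp; apply: eq_imset => k /=.
by rewrite scalemxAl.
Qed.

Lemma act_hyp A B c : A *m B = 1%:M -> B *m A = 1%:M -> act A (hyp c) = hyp (c *m B^T).
Proof.
move=> AB BA; apply/setP => y; rewrite in_hyp; apply/imsetP/idP.
  case=> x; rewrite in_hyp => Hx ->.
  by rewrite trmx_mul -!mulmxA (mulmxA B^T) -trmx_mul AB trmx1 mul1mx.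
move=> Hy; exists (y *m B); last by rewrite -mulmxA BA mulmx1.
by rewrite in_hyp trmx_mul mulmxA.
Qed.

Lemma act_mul A B S : act (A *m B) S = act B (act A S).
Proof. by rewrite /act -imset_comp; apply: eq_imset => u /=; rewrite mulmxA. Qed.

Lemma act1 S : act 1%:M S = S.
Proof. by rewrite /act (eq_imset _ (@mulmx1 _ _ _)) imset_id. Qed.

Lemma mulA_inj A : A \in unitmx -> injective (fun u : vec => u *m A).
Proof. by move=> U u v /(congr1 (mulmx^~ (invmx A))); rewrite -!mulmxA mulmxV // !mulmx1. Qed.

Lemma act_inj A : A \in unitmx -> injective (act A).
Proof.
move=> U S T H; apply/setP => x.
have: (x *m A \in act A S) = (x *m A \in act A T) by rewrite H.
by rewrite /act !(mem_imset _ _ (mulA_inj U)).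
Qed.

Lemma act_sub A S T : A \in unitmx -> (act A S \subset act A T) = (S \subset T).
Proof.
move=> U; apply/subsetP/subsetP => H x.
  by move=> Hx; have := H (x *m A); rewrite /act !(mem_imset _ _ (mulA_inj U)); apply.
by case/imsetP => y Hy ->; apply: imset_f; apply: H.
Qed.


Definition V9 : seq (F * F) := [seq (a, b) | a <- Fl, b <- Fl].
Definition V27 : seq (F * F * F) := [seq (x, c) | x <- V9, c <- Fl].
Definition V81 : seq T4 := [seq (x, d) | x <- V27, d <- Fl].

Lemma memV81 p : p \in V81.
Proof.
case: p => [[[a b] c] d].
by apply: allpairs_f; [apply: allpairs_f; [apply: allpairs_f|]|]; apply: memFl.
Qed.

Lemma forall_vec (P : vec -> bool) : all (fun p => P (tov p)) V81 -> forall x, P x.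
Proof. by move/allP => H x; rewrite -(ofvK x); apply: H; apply: memV81. Qed.

Definition zT : T4 := (0, 0, 0, 0).
Lemma tov_zT : tov zT = 0.
Proof. by apply/rowP => i; rewrite !mxE; case: i => [[|[|[|[|//]]]] Hi]. Qed.

Definition normT (p : T4) : bool :=
  let: (a, b, c, d) := p in
  if a != 0 then a == 1 else if b != 0 then b == 1 else if c != 0 then c == 1 else d == 1.
Definition reps : seq T4 := filter normT V81.
Definition Rl : seq vec := map tov reps.

Definition propT (p r : T4) := has (fun k => (k != f0) && (p == scaleT k r)) Fl.

Lemma reps_cover_c : all (fun p => (p == zT) || has (propT p) reps) V81.
Proof. by vm_compute. Qed.

Lemma reps_nz_c : zT \notin reps.
Proof. by vm_compute. Qed.

Lemma reps_uniq : uniq reps.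
Proof. by vm_compute. Qed.

Lemma Rl_uniq : uniq Rl.
Proof. by rewrite map_inj_uniq ?reps_uniq //; apply: tov_inj. Qed.

Lemma span1Z k v : k != 0 -> span1 (k *: v) = span1 v.
Proof.
move=> k0; apply/setP => y; apply/imsetP/imsetP => [[j _ ->]|[j _ ->]].
  by exists (j * k); rewrite ?scalerA.
by exists (j / k); rewrite // scalerA divfK.
Qed.

Lemma hypZ k c : k != 0 -> hyp (k *: c) = hyp c.
Proof.
move=> k0; apply/setP => y; rewrite !inE.
under eq_bigr => i _ do rewrite mxE -mulrA.
by rewrite -mulr_sumr mulf_eq0 (negbTE k0).
Qed.

Lemma propTP p r : propT p r -> exists2 k, k != 0 & tov p = k *: tov r.
Proof. by case/hasP => k _ /andP[k0 /eqP ->]; exists k; rewrite -?f0E // scaleTE. Qed.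

Lemma vec_rep (v : vec) : v != 0 -> exists2 r, r \in reps & exists2 k, k != 0 & v = k *: tov r.
Proof.
move=> v0; have := allP reps_cover_c (ofv v) (memV81 _).
case/orP => [/eqP H|/hasP[r Hr /propTP[k k0 E]]].
  by move: v0; rewrite -(ofvK v) H tov_zT eqxx.
by exists r => //; exists k; rewrite // -E ofvK.
Qed.

Lemma Rl_nz v : v \in Rl -> v != 0.
Proof.
case/mapP => r Hr ->; apply/negP => /eqP H.
by move: Hr reps_nz_c; rewrite -tov_zT in H; rewrite (tov_inj H) => ->.
Qed.

Lemma points_Rl : points = [set span1 v | v in Rl].
Proof.
apply/setP => S; apply/imsetP/imsetP => [[v]|[v Hv ->]].
  rewrite inE => /vec_rep[r Hr [k k0 ->]] ->.
  by exists (tov r); [apply: map_f | rewrite span1Z].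
by exists v; rewrite // inE Rl_nz.
Qed.

Lemma planes_Rl : planes = [set hyp v | v in Rl].
Proof.
apply/setP => S; apply/imsetP/imsetP => [[v]|[v Hv ->]].
  rewrite inE => /vec_rep[r Hr [k k0 ->]] ->.
  by exists (tov r); [apply: map_f | rewrite hypZ].
by exists v; rewrite // inE Rl_nz.
Qed.


Lemma card_seq (T : finType) (s : seq T) (P : pred T) :
  uniq s -> (forall x, x \in s) -> #|[set x | P x]| = count P s.
Proof.
move=> Us Fs; rewrite -size_filter; have /card_uniqP <- := filter_uniq P Us.
by apply: eq_card => x; rewrite inE mem_filter Fs andbT.
Qed.

Lemma card_sel (T U : finType) (f : T -> U) (s : seq T) (Q : pred U) :
  uniq s -> {in s &, injective f} -> #|[set y in [set f x | x in s] | Q y]| = count (Q \o f) s.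
Proof.
move=> Us If.
have -> : [set y in [set f x | x in s] | Q y] = f @: [set x | (x \in s) && Q (f x)].
  apply/setP => y; rewrite inE; apply/andP/imsetP => [[/imsetP[x Hx ->] Hq]|[x]].
    by exists x; rewrite // inE Hx.
  by rewrite inE => /andP[Hx Hq] ->; split=> //; apply: imset_f.
rewrite card_in_imset; last by move=> x y; rewrite !inE => /andP[Hx _] /andP[Hy _]; apply: If.
rewrite -size_filter; have /card_uniqP <- := filter_uniq (Q \o f) Us.
by apply: eq_card => x; rewrite inE mem_filter andbC.
Qed.

Definition sclosed (S : {set vec}) := forall k y, y \in S -> k *: y \in S.

Lemma sub_span1 v S : sclosed S -> (span1 v \subset S) = (v \in S).
Proof.
move=> Hs; apply/subsetP/idP => [H|Hv y /imsetP[k _ ->]]; last exact: Hs.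
by apply: H; apply/imsetP; exists 1; rewrite ?scale1r.
Qed.

Lemma hyp_scl c : sclosed (hyp c).
Proof.
move=> k y; rewrite !inE => /eqP H.
under eq_bigr => i _ do rewrite mxE mulrCA.
by rewrite -mulr_sumr H mulr0.
Qed.

Lemma span2_scl u w : sclosed (span2 u w).
Proof.
move=> k y /imset2P[a b _ _ ->]; apply/imset2P; exists (k * a) (k * b) => //.
by rewrite scalerDr !scalerA.
Qed.

Lemma axisA_scl : sclosed axisA.
Proof.
move=> k y; rewrite !inE /Defs.coord => /andP[/eqP H0 /eqP H3].
by rewrite !mxE H0 H3 !mulr0 eqxx.
Qed.

Lemma span1_inj_c :
  all (fun r => all (fun r' => ~~ has (fun k => r == scaleT k r') Fl || (r == r')) reps) reps.
Proof. by vm_compute. Qed.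

Lemma span1_mem v : v \in span1 v.
Proof. by apply/imsetP; exists 1; rewrite ?scale1r. Qed.

Lemma span1_Rl_inj : {in Rl &, injective span1}.
Proof.
move=> v v' /mapP[r Hr ->] /mapP[r' Hr' ->] E.
have := span1_mem (tov r); rewrite E in_span1T => H.
have := allP (allP span1_inj_c r Hr) r' Hr'; rewrite H /= => /eqP -> //.
Qed.

Lemma hyp_inj_c :
  all (fun r => all (fun r' => (r == r') ||
     has (fun x => (dotT r x == f0) != (dotT r' x == f0)) V81) reps) reps.
Proof. by vm_compute. Qed.

Lemma hyp_Rl_inj : {in Rl &, injective hyp}.
Proof.
move=> v v' /mapP[r Hr ->] /mapP[r' Hr' ->] E.
have := allP (allP hyp_inj_c r Hr) r' Hr'; case/orP => [/eqP -> //|/hasP[x _]].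
by rewrite f0E -!in_hypT E eqxx.
Qed.


Definition cvecT (t : option F) : T4 :=
  if t is Some s then (fmul s (fmul s s), fmul s s, s, f1) else (f1, f0, f0, f0).

Lemma tov4 a b c d : tov (a, b, c, d) = mkv a b c d. Proof. by []. Qed.

Lemma cvecTE t : tov (cvecT t) = cvec t.
Proof.
case: t => [s|]; rewrite /= ?f0E ?f1E //.
by rewrite !fmulE !exprS expr0 !mulr1.
Qed.

Definition Ol : seq (option F) := [:: None; Some f0; Some f1; Some f2].
Lemma memOl t : t \in Ol.
Proof.
by case: t => [s|] //; elim/Fcase: s.
Qed.
Lemma Ol_uniq : uniq Ol. Proof. by vm_compute. Qed.

Lemma cptE t : cpt t = span1 (tov (cvecT t)).
Proof. by rewrite cvecTE. Qed.

Lemma span1_eqT a b : (span1 (tov a) == span1 (tov b)) =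
  has (fun k => a == scaleT k b) Fl && has (fun k => b == scaleT k a) Fl.
Proof.
apply/idP/idP => [/eqP E|/andP[Ha Hb]].
  by apply/andP; split; rewrite -in_span1T; [rewrite -E | rewrite E]; apply: span1_mem.
rewrite eqEsubset !sub_span1 ?in_span1T ?Ha ?Hb //.
- by move=> k y /imsetP[j _ ->]; apply/imsetP; exists (k * j); rewrite ?scalerA.
- by move=> k y /imsetP[j _ ->]; apply/imsetP; exists (k * j); rewrite ?scalerA.
Qed.

Lemma cpt_inj_c : all (fun s => all (fun t =>
   ~~ (has (fun k => cvecT s == scaleT k (cvecT t)) Fl) || (s == t)) Ol) Ol.
Proof. by vm_compute. Qed.

Lemma cpt_inj : injective cpt.
Proof.
move=> s t E; have := allP (allP cpt_inj_c s (memOl s)) t (memOl t).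
by move: E; rewrite !cptE => /eqP; rewrite span1_eqT => /andP[-> _] /eqP.
Qed.

Lemma Ccurve_Ol : Ccurve = [set cpt t | t in Ol].
Proof. by apply/setP => P; apply/imsetP/imsetP => [[t _ ->]|[t _ ->]]; exists t; rewrite ?memOl. Qed.

Lemma meetC_scl pi : sclosed pi -> meetC pi = count (fun t => cvec t \in pi) Ol.
Proof.
move=> Hs; rewrite /meetC Ccurve_Ol card_sel ?Ol_uniq //; last by move=> x y _ _; apply: cpt_inj.
by apply: eq_count => t /=; rewrite /cpt sub_span1.
Qed.

Definition meetCT (c : T4) := count (fun t => dotT c (cvecT t) == f0) Ol.

Lemma meetC_hyp c : meetC (hyp (tov c)) = meetCT c.
Proof.
rewrite meetC_scl; last exact: hyp_scl.
by apply: eq_count => t; rewrite -cvecTE in_hypT f0E.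
Qed.

Lemma card_dPlanes d : #|dPlanes d| = count (fun r => meetCT r == d) reps.
Proof.
rewrite /dPlanes planes_Rl card_sel ?Rl_uniq //; last exact: hyp_Rl_inj.
by rewrite count_map; apply: eq_count => r /=; rewrite meetC_hyp.
Qed.

Definition oscT (t : option F) : T4 :=
  if t is Some s then (f1, f0, f0, fmul f2 s) else (f0, f0, f0, f1).

Lemma oscTE t : osc t = hyp (tov (oscT t)).
Proof.
case: t => [s|]; last by rewrite /= f0E f1E.
rewrite /=; congr (hyp (mkv _ _ _ _)); elim/Fcase: s; by apply: val_inj.
Qed.

Lemma Gamma_Ol : GammaPlanes = [set hyp v | v in map tov (map oscT Ol)].
Proof.
apply/setP => P; apply/imsetP/imsetP => [[t _ ->]|[v /mapP[x /mapP[t Ht ->] ->] ->]].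
  by exists (tov (oscT t)); rewrite ?oscTE // map_f // map_f // memOl.
by exists t; rewrite ?oscTE.
Qed.

Lemma osc_c : all (fun t => oscT t \in reps) Ol && uniq (map oscT Ol)
   && all (fun t => meetCT (oscT t) == 1%N) Ol.
Proof. by vm_compute. Qed.

Lemma Gamma_card : #|GammaPlanes| = 4%N.
Proof.
case/andP: osc_c => /andP[Hr Hu] _.
rewrite Gamma_Ol card_in_imset.
  have /card_uniqP -> : uniq (map tov (map oscT Ol)) by rewrite map_inj_uniq //; exact: tov_inj.
  by rewrite !size_map.
move=> x y /mapP[x' /mapP[t Ht ->] ->] /mapP[y' /mapP[t' Ht' ->] ->].
apply: hyp_Rl_inj; apply: map_f; apply: (allP Hr); done.
Qed.

Lemma Gamma_sub : GammaPlanes \subset dPlanes 1.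
Proof.
case/andP: osc_c => /andP[Hr _] Hm.
apply/subsetP => P /imsetP[t _ ->]; rewrite inE oscTE meetC_hyp (allP Hm _ (memOl t)) andbT.
rewrite planes_Rl; apply: imset_f; apply: map_f; apply: (allP Hr); exact: memOl.
Qed.

Lemma N1E : N1 = dPlanes 1.
Proof.
apply/setP => P; rewrite /N1 /oneBarPlanes !inE.
case: (boolP (P \in GammaPlanes)) => HG /=.
  by have := subsetP Gamma_sub P HG; rewrite inE.
by rewrite andbT.
Qed.


Definition fP (P : {set vec}) : nat := #|[set pi in dPlanes 3 | P \subset pi]|.
Definition fT (r : T4) := count (fun c => (meetCT c == 3%N) && (dotT c r == f0)) reps.

Lemma f_span1 r : fP (span1 (tov r)) = fT r.
Proof.
rewrite /fP (_ : [set pi in dPlanes 3 | _] = [set pi in planes | (meetC pi == 3%N) && (span1 (tov r) \subset pi)]); last first.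
  by apply/setP => pi; rewrite !inE andbA.
rewrite planes_Rl card_sel ?Rl_uniq //; last exact: hyp_Rl_inj.
rewrite count_map; apply: eq_count => c /=.
by rewrite meetC_hyp sub_span1 ?in_hypT ?f0E //; apply: hyp_scl.
Qed.

Definition pclass n := [set P in points | fP P == n].

Lemma points_case P : P \in points -> exists2 r, r \in reps & P = span1 (tov r).
Proof. by rewrite points_Rl => /imsetP[v /mapP[r Hr ->] ->]; exists r. Qed.

Definition span1eqT a b :=
  has (fun k => a == scaleT k b) Fl && has (fun k => b == scaleT k a) Fl.
Definition inCT r := has (fun t => span1eqT r (cvecT t)) Ol.

Lemma inC_span1 r : (span1 (tov r) \in Ccurve) = inCT r.
Proof.
rewrite Ccurve_Ol; apply/imsetP/hasP => [[t _ E]|[t _ E]].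
  by exists t; rewrite ?memOl // /span1eqT -span1_eqT -cptE E.
by exists t; rewrite ?memOl //; apply/eqP; rewrite cptE span1_eqT.
Qed.

Definition inAxT (r : T4) := let: (a, b, c, d) := r in (a == f0) && (d == f0).

Lemma inAx_span1 r : (span1 (tov r) \subset axisA) = inAxT r.
Proof.
rewrite sub_span1; last exact: axisA_scl.
case: r => [[[a b] c] d]; rewrite inE /Defs.coord /= !mxE !inordK //= f0E.
Qed.

Definition tanA (t : option F) : T4 := if t is Some _ then cvecT t else (f1, f0, f0, f0).
Definition tanB (t : option F) : T4 :=
  if t is Some s then (f0, fmul f2 s, f1, f0) else (f0, f1, f0, f0).

Lemma tangentE t : tangent t = span2 (tov (tanA t)) (tov (tanB t)).
Proof.
case: t => [s|]; last by rewrite /= f0E f1E.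
rewrite /tangent /tanA cvecTE; congr (span2 _ _); rewrite /=; congr (mkv _ _ _ _);
  elim/Fcase: s; by apply: val_inj.
Qed.

Definition onTanT r := has (fun t => inspan2 r (tanA t) (tanB t)) Ol.

Lemma tan_span1 r : on_tangent (span1 (tov r)) = onTanT r.
Proof.
apply/existsP/hasP => [[t]|[t _]].
  by rewrite tangentE sub_span1 ?in_span2T => [H|]; [exists t; rewrite ?memOl|apply: span2_scl].
by move=> H; exists t; rewrite tangentE sub_span1 ?in_span2T //; apply: span2_scl.
Qed.

Definition onChT r :=
  has (fun s => has (fun t => (s != t) && inspan2 r (cvecT s) (cvecT t)) Ol) Ol.

Lemma ch_span1 r : on_real_chord (span1 (tov r)) = onChT r.
Proof.
apply/existsP/hasP => [[s /existsP[t /andP[st H]]]|[s _ /hasP[t _ /andP[st H]]]].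
  exists s; rewrite ?memOl //; apply/hasP; exists t; rewrite ?memOl // st /=.
  by move: H; rewrite -!cvecTE sub_span1 ?in_span2T //; apply: span2_scl.
exists s; apply/existsP; exists t; rewrite st /= -!cvecTE sub_span1 ?in_span2T //; apply: span2_scl.
Qed.


Definition ICT r := [&& ~~ inCT r, ~~ inAxT r, ~~ onTanT r & ~~ onChT r].
Definition TOT r := [&& ~~ inCT r, ~~ inAxT r & onTanT r].
Definition RCT r := [&& ~~ inCT r, ~~ inAxT r, ~~ onTanT r & onChT r].

Lemma classes_c : all (fun r => [&& inCT r == (fT r == 3%N),
   (inAxT r || ICT r) == (fT r == 1%N), TOT r == (fT r == 0%N) &
   RCT r == (fT r == 2%N)]) reps.
Proof. vm_compute. by []. Qed.

Lemma M1E : M1 = pclass 3.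
Proof.
apply/setP => P; rewrite /M1 /CPoints /pclass !inE.
case HP: (P \in points) => //=; have [r Hr ->] := points_case HP.
rewrite inC_span1 f_span1.
by have /and4P[/eqP -> _ _ _] := allP classes_c r Hr.
Qed.

Lemma M2E : M2 = pclass 1.
Proof.
apply/setP => P; rewrite /M2 /FourGammaPoints /ICPoints /pclass !inE.
case HP: (P \in points) => //=; have [r Hr ->] := points_case HP.
rewrite inC_span1 f_span1 inAx_span1 tan_span1 ch_span1.
by have /and4P[_ /eqP <- _ _] := allP classes_c r Hr.
Qed.

Lemma M3E : M3 = pclass 0.
Proof.
apply/setP => P; rewrite /M3 /TOPoints /pclass !inE.
case HP: (P \in points) => //=; have [r Hr ->] := points_case HP.
rewrite inC_span1 f_span1 inAx_span1 tan_span1.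
by have /and4P[_ _ /eqP <- _] := allP classes_c r Hr.
Qed.

Lemma M4E : M4 = pclass 2.
Proof.
apply/setP => P; rewrite /M4 /RCPoints /pclass !inE.
case HP: (P \in points) => //=; have [r Hr ->] := points_case HP.
rewrite inC_span1 f_span1 inAx_span1 tan_span1 ch_span1.
by have /and4P[_ _ _ /eqP <-] := allP classes_c r Hr.
Qed.

Lemma card_pts (Q : pred {set vec}) :
  #|[set P in points | Q P]| = count (fun r => Q (span1 (tov r))) reps.
Proof.
rewrite points_Rl card_sel ?Rl_uniq ?count_map //; exact: span1_Rl_inj.
Qed.

Lemma card_pclass n : #|pclass n| = count (fun r => fT r == n) reps.
Proof. by rewrite /pclass card_pts; apply: eq_count => r; rewrite f_span1. Qed.

Lemma card_FG : #|FourGammaPoints| = count inAxT reps.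
Proof. by rewrite card_pts; apply: eq_count => r; rewrite /= inAx_span1. Qed.

Lemma card_IC : #|ICPoints| = count ICT reps.
Proof.
by rewrite card_pts; apply: eq_count => r; rewrite /= inC_span1 inAx_span1 tan_span1 ch_span1.
Qed.

Lemma point_cards : [/\ #|M1| = 4%N, #|FourGammaPoints| = 4%N, #|ICPoints| = 12%N,
          #|M2| = 16%N & #|M3| = 8%N /\ #|M4| = 12%N].
Proof.
rewrite M1E M2E M3E M4E !card_pclass card_FG card_IC.
by vm_compute.
Qed.


Definition fnat (n : nat) : F := nth f0 Fl n.
Definition tom (s : seq nat) : 'M[F]_4 := \matrix_(i < 4, j < 4) fnat (nth 0%N s (4 * i + j)).
Definition colT (s : seq nat) (j : nat) : T4 :=
  (fnat (nth 0%N s j), fnat (nth 0%N s (4 + j)), fnat (nth 0%N s (8 + j)), fnat (nth 0%N s (12 + j))).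
Definition rowT (s : seq nat) (i : nat) : T4 :=
  (fnat (nth 0%N s (4 * i)), fnat (nth 0%N s (4 * i + 1)), fnat (nth 0%N s (4 * i + 2)),
   fnat (nth 0%N s (4 * i + 3))).
Definition vmulT (p : T4) (s : seq nat) : T4 :=
  (dotT p (colT s 0), dotT p (colT s 1), dotT p (colT s 2), dotT p (colT s 3)).
Definition vmulTt (p : T4) (s : seq nat) : T4 :=
  (dotT p (rowT s 0), dotT p (rowT s 1), dotT p (rowT s 2), dotT p (rowT s 3)).

Lemma vmulTE p s : tov p *m tom s = tov (vmulT p s).
Proof.
apply/rowP => j; rewrite mxE.
have E : forall x : T4, tov x ord0 j = nth 0 [:: x.1.1.1; x.1.1.2; x.1.2; x.2] j.
  by case=> [[[a b] c] d]; rewrite mxE.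
rewrite E; clear E.
case: j => [[|[|[|[|//]]]] Hj] /=; rewrite -dotTE; apply: eq_bigr => k _; congr (_ * _);
  rewrite !mxE; case: k => [[|[|[|[|//]]]] Hk].
all: by [].
Qed.

Lemma vmulTtE p s : tov p *m (tom s)^T = tov (vmulTt p s).
Proof.
apply/rowP => j; rewrite mxE.
have E : forall x : T4, tov x ord0 j = nth 0 [:: x.1.1.1; x.1.1.2; x.1.2; x.2] j.
  by case=> [[[a b] c] d]; rewrite mxE.
rewrite E; clear E.
case: j => [[|[|[|[|//]]]] Hj] /=; rewrite -dotTE; apply: eq_bigr => k _; congr (_ * _);
  rewrite !mxE; case: k => [[|[|[|[|//]]]] Hk].
all: by [].
Qed.

Lemma inv_check s t : all (fun p => vmulT (vmulT p s) t == p) V81 -> tom s *m tom t = 1%:M.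
Proof.
move=> H.
have K : forall x : vec, x *m tom s *m tom t == x.
  apply: forall_vec; apply/allP => p Hp.
  by rewrite !vmulTE (eqP (allP H p Hp)).
by apply/row_matrixP => i; rewrite !rowE mulmxA mulmx1 (eqP (K _)).
Qed.

Lemma G3_actC A : A \in G3 -> [set act A P | P in Ccurve] = Ccurve.
Proof. by rewrite inE => /andP[_ /eqP]. Qed.

Lemma G3_unit A : A \in G3 -> A \in unitmx.
Proof. by rewrite inE => /andP[]. Qed.

Lemma G3_mul A B : A \in G3 -> B \in G3 -> A *m B \in G3.
Proof.
move=> HA HB; rewrite inE unitmx_mul !G3_unit //=.
rewrite (eq_imset _ (fun P => act_mul A B P)) imset_comp G3_actC // G3_actC //.
Qed.

Lemma act_invK A S : A \in unitmx -> act (invmx A) (act A S) = S.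
Proof. by move=> U; rewrite -act_mul mulmxV // act1. Qed.

Lemma G3_inv A : A \in G3 -> invmx A \in G3.
Proof.
move=> HA; rewrite inE unitmx_inv G3_unit //=.
rewrite -{1}(G3_actC HA) -imset_comp.
by rewrite (eq_imset _ (fun P => act_invK P (G3_unit HA))) imset_id.
Qed.

Lemma act_planes A pi : A \in unitmx -> pi \in planes -> act A pi \in planes.
Proof.
move=> U /imsetP[c]; rewrite inE => c0 ->.
rewrite (act_hyp (B := invmx A)) ?mulmxV ?mulVmx //; apply: imset_f; rewrite inE.
apply: contra c0 => /eqP H.
have E : c = c *m (invmx A)^T *m A^T by rewrite -mulmxA -trmx_mul mulmxV // trmx1 mulmx1.
by rewrite E H mul0mx.
Qed.

Lemma act_points A P : A \in unitmx -> P \in points -> act A P \in points.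
Proof.
move=> U /imsetP[v]; rewrite inE => v0 ->.
rewrite act_span1; apply: imset_f; rewrite inE.
apply: contra v0 => /eqP H; apply/eqP; apply: (mulA_inj U); by rewrite H mul0mx.
Qed.

Lemma card_act1 A (X : {set {set vec}}) S : A \in unitmx -> act A @: X = X ->
  #|[set Y in X | act A S \subset Y]| = #|[set Y in X | S \subset Y]|.
Proof.
move=> U HX.
have -> : [set Y in X | act A S \subset Y] = act A @: [set Y in X | S \subset Y].
  apply/setP => Y; rewrite inE; apply/andP/imsetP => [[HY HS]|[Z]].
    move: HY HS; rewrite -{1}HX => /imsetP[Z HZ ->] HS.
    by exists Z => //; rewrite inE HZ /= -(act_sub S Z U).
  rewrite inE => /andP[HZ HS] ->; split; last by rewrite act_sub.
  by rewrite -HX; apply: imset_f.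
by rewrite card_imset //; apply: act_inj.
Qed.

Lemma card_act2 A (X : {set {set vec}}) S : A \in unitmx -> act A @: X = X ->
  #|[set Y in X | Y \subset act A S]| = #|[set Y in X | Y \subset S]|.
Proof.
move=> U HX.
have -> : [set Y in X | Y \subset act A S] = act A @: [set Y in X | Y \subset S].
  apply/setP => Y; rewrite inE; apply/andP/imsetP => [[HY HS]|[Z]].
    move: HY HS; rewrite -{1}HX => /imsetP[Z HZ ->] HS.
    by exists Z => //; rewrite inE HZ /= -(act_sub Z S U).
  rewrite inE => /andP[HZ HS] ->; split; last by rewrite act_sub.
  by rewrite -HX; apply: imset_f.
by rewrite card_imset //; apply: act_inj.
Qed.

Lemma meetC_act A pi : A \in G3 -> meetC (act A pi) = meetC pi.
Proof. by move=> HA; rewrite /meetC card_act2 ?G3_unit ?G3_actC. Qed.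

Lemma dPlanes_act A d pi : A \in G3 -> pi \in dPlanes d -> act A pi \in dPlanes d.
Proof.
by move=> HA; rewrite !inE => /andP[Hp Hm]; rewrite act_planes ?G3_unit // meetC_act.
Qed.

Lemma dP3_act A : A \in G3 -> act A @: dPlanes 3 = dPlanes 3.
Proof.
move=> HA; apply/eqP; rewrite eqEcard card_imset; last by apply: act_inj; apply: G3_unit.
rewrite leqnn andbT; apply/subsetP => Y /imsetP[Z HZ ->]; exact: dPlanes_act.
Qed.

Lemma fP_act A P : A \in G3 -> fP (act A P) = fP P.
Proof. by move=> HA; rewrite /fP card_act1 ?G3_unit ?dP3_act. Qed.

Lemma pclass_act A n P : A \in G3 -> P \in pclass n -> act A P \in pclass n.
Proof.
by move=> HA; rewrite !inE => /andP[Hp Hm]; rewrite act_points ?G3_unit // fP_act.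
Qed.

Definition goodW (w : seq nat * seq nat) :=
  [&& all (fun p => vmulT (vmulT p w.1) w.2 == p) V81,
      all (fun p => vmulT (vmulT p w.2) w.1 == p) V81 &
      all (fun t => has (fun t' => propT (vmulT (cvecT t) w.1) (cvecT t')) Ol) Ol].

Lemma goodW_inv w : goodW w -> tom w.1 *m tom w.2 = 1%:M /\ tom w.2 *m tom w.1 = 1%:M.
Proof. by case/and3P => H1 H2 _; split; apply: inv_check. Qed.

Lemma goodW_G3 w : goodW w -> tom w.1 \in G3.
Proof.
move=> Hw; have [AB _] := goodW_inv Hw.
have U : tom w.1 \in unitmx by case: (mulmx1_unit AB).
case/and3P: Hw => _ _ HC.
rewrite inE U /= eqEcard (card_imset _ (act_inj U)).
rewrite leqnn andbT; apply/subsetP => P /imsetP[Q /imsetP[t _ ->] ->].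
have /hasP[t' _ /propTP[k k0 E]] := allP HC t (memOl t).
rewrite cptE act_span1 vmulTE E span1Z // -cptE; exact: imset_f.
Qed.

Lemma goodW_plane w c r : goodW w -> propT (vmulTt c w.2) r ->
  act (tom w.1) (hyp (tov c)) = hyp (tov r).
Proof.
move=> Hw /propTP[k k0 E]; have [AB BA] := goodW_inv Hw.
by rewrite (act_hyp _ AB BA) vmulTtE E hypZ.
Qed.

Lemma goodW_point w c r : goodW w -> propT (vmulT c w.1) r ->
  act (tom w.1) (span1 (tov c)) = span1 (tov r).
Proof. by move=> Hw /propTP[k k0 E]; rewrite act_span1 vmulTE E span1Z. Qed.


Definition Wl : seq (seq nat * seq nat) := [::
  ([:: 0; 0; 0; 1; 2; 1; 0; 1; 1; 0; 1; 2; 1; 0; 0; 0], [:: 0; 0; 0; 1; 2; 1; 0; 1; 1; 0; 1; 2; 1; 0; 0; 0]);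
  ([:: 0; 0; 0; 1; 1; 1; 0; 1; 0; 1; 2; 0; 1; 1; 1; 1], [:: 2; 2; 2; 2; 0; 2; 1; 1; 0; 2; 0; 1; 1; 0; 0; 0]);
  ([:: 0; 0; 0; 1; 0; 0; 2; 0; 0; 1; 0; 0; 2; 0; 0; 0], [:: 0; 0; 0; 2; 0; 0; 1; 0; 0; 2; 0; 0; 1; 0; 0; 0]);
  ([:: 0; 0; 0; 1; 2; 0; 1; 0; 1; 1; 2; 0; 1; 1; 1; 1], [:: 1; 2; 1; 2; 0; 1; 1; 0; 1; 0; 1; 2; 1; 0; 0; 0]);
  ([:: 0; 0; 0; 1; 2; 2; 0; 2; 1; 0; 1; 2; 1; 0; 0; 0], [:: 0; 0; 0; 1; 2; 2; 0; 2; 1; 0; 1; 2; 1; 0; 0; 0]);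
  ([:: 0; 0; 0; 1; 0; 0; 1; 0; 0; 1; 0; 0; 1; 0; 0; 0], [:: 0; 0; 0; 1; 0; 0; 1; 0; 0; 1; 0; 0; 1; 0; 0; 0]);
  ([:: 0; 0; 0; 1; 1; 0; 2; 0; 0; 1; 0; 0; 1; 0; 0; 0], [:: 0; 0; 0; 1; 0; 0; 1; 0; 0; 2; 0; 1; 1; 0; 0; 0]);
  ([:: 0; 0; 0; 1; 1; 2; 0; 2; 0; 1; 1; 0; 1; 2; 1; 2], [:: 1; 2; 1; 2; 0; 1; 1; 2; 0; 2; 0; 1; 1; 0; 0; 0]);
  ([:: 1; 0; 0; 0; 0; 1; 0; 0; 0; 0; 1; 0; 0; 0; 0; 1], [:: 1; 0; 0; 0; 0; 1; 0; 0; 0; 0; 1; 0; 0; 0; 0; 1]);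
  ([:: 1; 0; 0; 0; 0; 2; 0; 1; 0; 0; 1; 0; 0; 0; 0; 1], [:: 1; 0; 0; 0; 0; 2; 0; 1; 0; 0; 1; 0; 0; 0; 0; 1]);
  ([:: 1; 0; 0; 0; 2; 0; 2; 2; 2; 1; 0; 1; 0; 0; 0; 1], [:: 1; 0; 0; 0; 1; 0; 1; 2; 2; 2; 0; 2; 0; 0; 0; 1]);
  ([:: 1; 0; 0; 0; 1; 0; 1; 2; 2; 1; 0; 1; 0; 0; 0; 1], [:: 1; 0; 0; 0; 1; 0; 1; 2; 2; 1; 0; 1; 0; 0; 0; 1]);
  ([:: 1; 2; 1; 2; 0; 1; 1; 0; 0; 0; 1; 0; 0; 0; 0; 1], [:: 1; 1; 1; 1; 0; 1; 2; 0; 0; 0; 1; 0; 0; 0; 0; 1]);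
  ([:: 1; 1; 1; 1; 0; 1; 2; 0; 0; 0; 1; 0; 0; 0; 0; 1], [:: 1; 2; 1; 2; 0; 1; 1; 0; 0; 0; 1; 0; 0; 0; 0; 1]);
  ([:: 1; 1; 1; 1; 1; 1; 2; 0; 2; 0; 1; 0; 0; 0; 0; 1], [:: 2; 1; 2; 1; 0; 1; 1; 0; 2; 1; 0; 1; 0; 0; 0; 1]);
  ([:: 1; 2; 1; 2; 2; 1; 1; 0; 2; 0; 1; 0; 0; 0; 0; 1], [:: 2; 2; 2; 2; 0; 1; 2; 0; 2; 2; 0; 2; 0; 0; 0; 1]);
  ([:: 1; 1; 1; 1; 0; 2; 1; 1; 0; 0; 1; 0; 0; 0; 0; 1], [:: 1; 1; 1; 1; 0; 2; 1; 1; 0; 0; 1; 0; 0; 0; 0; 1]);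
  ([:: 1; 2; 1; 2; 1; 2; 2; 1; 2; 0; 1; 0; 0; 0; 0; 1], [:: 2; 1; 2; 1; 0; 2; 2; 1; 2; 1; 0; 1; 0; 0; 0; 1]);
  ([:: 1; 2; 1; 2; 0; 2; 2; 1; 0; 0; 1; 0; 0; 0; 0; 1], [:: 1; 2; 1; 2; 0; 2; 2; 1; 0; 0; 1; 0; 0; 0; 0; 1]);
  ([:: 1; 1; 1; 1; 2; 2; 1; 1; 2; 0; 1; 0; 0; 0; 0; 1], [:: 2; 2; 2; 2; 0; 2; 1; 1; 2; 2; 0; 2; 0; 0; 0; 1]);
  ([:: 1; 0; 0; 0; 0; 2; 0; 0; 0; 1; 1; 0; 1; 2; 1; 2], [:: 1; 0; 0; 0; 0; 2; 0; 0; 0; 1; 1; 0; 1; 2; 1; 2]);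
  ([:: 1; 0; 0; 0; 0; 1; 0; 0; 0; 2; 1; 0; 1; 1; 1; 1], [:: 1; 0; 0; 0; 0; 1; 0; 0; 0; 1; 1; 0; 2; 1; 2; 1]);
  ([:: 1; 0; 0; 0; 0; 1; 0; 2; 0; 2; 1; 1; 1; 1; 1; 1], [:: 1; 0; 0; 0; 1; 0; 1; 2; 0; 1; 1; 0; 1; 2; 1; 2]);
  ([:: 1; 0; 0; 0; 0; 2; 0; 1; 0; 1; 1; 2; 1; 2; 1; 2], [:: 1; 0; 0; 0; 2; 0; 2; 1; 0; 1; 1; 0; 2; 1; 2; 1]);
  ([:: 1; 1; 1; 1; 0; 1; 2; 2; 0; 2; 2; 1; 1; 2; 1; 2], [:: 2; 2; 2; 2; 1; 1; 2; 2; 0; 1; 1; 0; 1; 2; 1; 2]);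
  ([:: 1; 1; 1; 1; 0; 1; 2; 0; 0; 2; 2; 0; 1; 2; 1; 2], [:: 2; 2; 2; 2; 0; 2; 1; 0; 0; 1; 1; 0; 2; 1; 2; 1]);
  ([:: 0; 0; 0; 1; 1; 1; 0; 1; 1; 0; 1; 2; 2; 0; 0; 0], [:: 0; 0; 0; 2; 2; 1; 0; 1; 1; 0; 1; 1; 1; 0; 0; 0]);
  ([:: 0; 0; 0; 1; 0; 0; 1; 0; 0; 2; 0; 1; 1; 0; 0; 0], [:: 0; 0; 0; 1; 1; 0; 2; 0; 0; 1; 0; 0; 1; 0; 0; 0]);
  ([:: 0; 0; 0; 1; 2; 1; 0; 1; 2; 0; 2; 2; 1; 0; 0; 0], [:: 0; 0; 0; 1; 2; 1; 0; 1; 2; 0; 2; 2; 1; 0; 0; 0]);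
  ([:: 1; 0; 0; 0; 1; 0; 1; 2; 2; 2; 0; 2; 0; 0; 0; 1], [:: 1; 0; 0; 0; 2; 0; 2; 2; 2; 1; 0; 1; 0; 0; 0; 1]);
  ([:: 0; 0; 0; 1; 2; 0; 1; 0; 2; 2; 1; 1; 1; 1; 1; 1], [:: 2; 2; 2; 2; 1; 1; 2; 0; 2; 0; 2; 2; 1; 0; 0; 0]);
  ([:: 0; 0; 0; 1; 2; 0; 1; 0; 2; 1; 1; 0; 1; 2; 1; 2], [:: 2; 2; 2; 2; 0; 2; 1; 0; 2; 0; 2; 2; 1; 0; 0; 0]);
  ([:: 0; 0; 0; 1; 2; 0; 1; 0; 1; 2; 2; 1; 1; 2; 1; 2], [:: 1; 2; 1; 2; 1; 2; 2; 0; 1; 0; 1; 2; 1; 0; 0; 0])].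

Definition mkT (a b c d : nat) : T4 := (fnat a, fnat b, fnat c, fnat d).
Definition plRep (d : nat) : T4 :=
  match d with 0 => mkT 1 0 2 1 | 1 => mkT 0 0 0 1 | 2 => mkT 0 0 1 0 | _ => mkT 0 1 0 2 end.
Definition ptRep (n : nat) : T4 :=
  match n with 0 => mkT 0 0 1 1 | 1 => mkT 0 0 1 0 | 2 => mkT 0 1 0 1 | _ => mkT 0 0 0 1 end.
Definition D4 : seq nat := [:: 0; 1; 2; 3]%N.

Lemma Wgood : all goodW Wl.
Proof. vm_compute. by []. Qed.

Lemma cov_c :
  [&& all (fun d => (plRep d \in reps) && (meetCT (plRep d) == d)) D4,
      all (fun d => (ptRep d \in reps) && (fT (ptRep d) == d)) D4,
      all (fun r => (meetCT r < 4)%N && (fT r < 4)%N) reps,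
      all (fun d => all (fun r => (meetCT r != d) ||
          has (fun w => propT (vmulTt (plRep d) w.2) r) Wl) reps) D4 &
      all (fun d => all (fun r => (fT r != d) ||
          has (fun w => propT (vmulT (ptRep d) w.1) r) Wl) reps) D4].
Proof. vm_compute. by []. Qed.

Lemma orbit_eq (X : {set {set vec}}) rep S :
  (forall Y, Y \in X -> exists2 A, A \in G3 & act A rep = Y) ->
  (forall A Y, A \in G3 -> Y \in X -> act A Y \in X) -> S \in X -> Gorbit S = X.
Proof.
move=> Hcov Hinv HS; apply/setP => Y; apply/imsetP/idP => [[A HA ->]|HY]; first exact: Hinv.
have [A HA EA] := Hcov Y HY; have [B HB EB] := Hcov S HS.
exists (invmx B *m A); first by apply: G3_mul => //; apply: G3_inv.
by rewrite act_mul -EB act_invK ?G3_unit // EA.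
Qed.

Lemma memD4 d : (d < 4)%N -> d \in D4.
Proof. by case: d => [|[|[|[|]]]]. Qed.

Lemma planes_case P : P \in planes -> exists2 r, r \in reps & P = hyp (tov r).
Proof. by rewrite planes_Rl => /imsetP[v /mapP[r Hr ->] ->]; exists r. Qed.

Lemma plane_cov d Y : (d < 4)%N -> Y \in dPlanes d ->
  exists2 A, A \in G3 & act A (hyp (tov (plRep d))) = Y.
Proof.
move=> Hd; rewrite inE => /andP[/planes_case[r Hr ->] /eqP Hm].
case/and5P: cov_c => _ _ _ /allP /(_ d (memD4 Hd)) /allP /(_ r Hr) + _.
rewrite meetC_hyp in Hm; case/orP => [|/hasP[w Hw Hp]]; first by rewrite Hm eqxx.
exists (tom w.1); first by apply: goodW_G3; apply: (allP Wgood).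
by apply: goodW_plane => //; apply: (allP Wgood).
Qed.

Lemma point_cov n Y : (n < 4)%N -> Y \in pclass n ->
  exists2 A, A \in G3 & act A (span1 (tov (ptRep n))) = Y.
Proof.
move=> Hd; rewrite inE => /andP[/points_case[r Hr ->] /eqP Hm].
case/and5P: cov_c => _ _ _ _ /allP /(_ n (memD4 Hd)) /allP /(_ r Hr).
rewrite f_span1 in Hm; case/orP => [|/hasP[w Hw Hp]]; first by rewrite Hm eqxx.
exists (tom w.1); first by apply: goodW_G3; apply: (allP Wgood).
by apply: goodW_point => //; apply: (allP Wgood).
Qed.

Lemma plane_orbit d pi : (d < 4)%N -> pi \in dPlanes d -> Gorbit pi = dPlanes d.
Proof.
move=> Hd; apply: (orbit_eq (rep := hyp (tov (plRep d)))); first by move=> Y; apply: plane_cov.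
by move=> A Y HA; apply: dPlanes_act.
Qed.

Lemma point_orbit n P : (n < 4)%N -> P \in pclass n -> Gorbit P = pclass n.
Proof.
move=> Hd; apply: (orbit_eq (rep := span1 (tov (ptRep n)))); first by move=> Y; apply: point_cov.
by move=> A Y HA; apply: pclass_act.
Qed.

Lemma plRep_in d : (d < 4)%N -> hyp (tov (plRep d)) \in dPlanes d.
Proof.
move=> Hd; case/and5P: cov_c => /allP /(_ d (memD4 Hd)) /andP[Hr Hm] _ _ _ _.
rewrite inE meetC_hyp Hm andbT planes_Rl; apply: imset_f; exact: map_f.
Qed.

Lemma ptRep_in n : (n < 4)%N -> span1 (tov (ptRep n)) \in pclass n.
Proof.
move=> Hd; case/and5P: cov_c => _ /allP /(_ n (memD4 Hd)) /andP[Hr Hm] _ _ _.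
rewrite inE f_span1 Hm andbT points_Rl; apply: imset_f; exact: map_f.
Qed.

Lemma meetC_lt4 pi : pi \in planes -> (meetC pi < 4)%N.
Proof.
case/planes_case => r Hr ->; rewrite meetC_hyp.
by case/and5P: cov_c => _ _ /allP /(_ r Hr) /andP[].
Qed.

Lemma fP_lt4 P : P \in points -> (fP P < 4)%N.
Proof.
case/points_case => r Hr ->; rewrite f_span1.
by case/and5P: cov_c => _ _ /allP /(_ r Hr) /andP[].
Qed.

Lemma plane_orbits : [set Gorbit pi | pi in planes] = [set N1; N2; N3; N4].
Proof.
rewrite N1E /N2 /N3 /N4; apply/setP => X; rewrite !inE; apply/imsetP/idP.
  case=> pi Hpi ->; have Hd := meetC_lt4 Hpi.
  have Hm : pi \in dPlanes (meetC pi) by rewrite inE Hpi eqxx.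
  rewrite (plane_orbit Hd Hm).
  by move: Hd; case: (meetC pi) => [|[|[|[|n]]]] Hd; rewrite ?eqxx ?orbT.
have H : forall d, (d < 4)%N -> exists2 pi, pi \in planes & dPlanes d = Gorbit pi.
  move=> d Hd; exists (hyp (tov (plRep d))).
    by have := plRep_in Hd; rewrite inE => /andP[].
  by rewrite (plane_orbit Hd (plRep_in Hd)).
by rewrite -!orbA => /or4P[] /eqP ->; apply: H.
Qed.

Lemma point_orbits : [set Gorbit P | P in points] = [set M1; M2; M3; M4].
Proof.
rewrite M1E M2E M3E M4E; apply/setP => X; rewrite !inE; apply/imsetP/idP.
  case=> P HP ->; have Hd := fP_lt4 HP.
  have Hm : P \in pclass (fP P) by rewrite inE HP eqxx.
  rewrite (point_orbit Hd Hm).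
  by move: Hd; case: (fP P) => [|[|[|[|n]]]] Hd; rewrite ?eqxx ?orbT.
have H : forall n, (n < 4)%N -> exists2 P, P \in points & pclass n = Gorbit P.
  move=> n Hd; exists (span1 (tov (ptRep n))).
    by have := ptRep_in Hd; rewrite inE => /andP[].
  by rewrite (point_orbit Hd (ptRep_in Hd)).
by rewrite -!orbA => /or4P[] /eqP ->; apply: H.
Qed.

Lemma plane_cards : [/\ #|GammaPlanes| = 4%N, #|oneBarPlanes| = 12%N, #|N1| = 16%N,
          #|N2| = 12%N & #|N3| = 4%N /\ #|N4| = 8%N].
Proof.
have HN1 : #|N1| = 16%N by rewrite N1E card_dPlanes; vm_compute.
have HN2 : #|N2| = 12%N by rewrite /N2 card_dPlanes; vm_compute.
have HN3 : #|N3| = 4%N by rewrite /N3 card_dPlanes; vm_compute.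
have HN4 : #|N4| = 8%N by rewrite /N4 card_dPlanes; vm_compute.
have HI : GammaPlanes :&: oneBarPlanes = set0.
  apply/setP => P; rewrite in_set0 in_setI /oneBarPlanes in_set.
  by case: (P \in GammaPlanes); rewrite ?andbF.
have := HN1; rewrite /N1 cardsU HI cards0 subn0 Gamma_card => H1.
have H2 : #|oneBarPlanes| = 12%N by move: H1; case: #|oneBarPlanes| => // n [] ->.
by split.
Qed.

Theorem theorem5p2 :
  [/\ [set Gorbit pi | pi in planes] = [set N1; N2; N3; N4],
      [/\ #|GammaPlanes| = 4%N, #|oneBarPlanes| = 12%N, #|N1| = 16%N,
          #|N2| = 12%N & #|N3| = 4%N /\ #|N4| = 8%N],
      [set Gorbit P | P in points] = [set M1; M2; M3; M4] &
      [/\ #|M1| = 4%N, #|FourGammaPoints| = 4%N, #|ICPoints| = 12%N,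
          #|M2| = 16%N & #|M3| = 8%N /\ #|M4| = 12%N]].
Proof.
split.
- exact: plane_orbits.
- exact: plane_cards.
- exact: point_orbits.
- exact: point_cards.
Qed.
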